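(* Let $c<-14$, $u\in\Omega_0^M$ with $\kappa(u)=c$, and let $v$ be a node of the binary tree $B_\Lambda(u)$. Define a sequence $v_0=v,v_1,v_2,\dots$ by $v_{i+1}=Q_x(v_i)$ if $\tau(Q_x(v_i))<\tau(v_i)$; otherwise $v_{i+1}=Q_y(v_i)$ if $\tau(Q_y(v_i))<\tau(v_i)$; otherwise $v_{i+1}=Q_z(v_i)$. Then there is $n$ (depending only on $c$ and $v$) with $v_n=u$, and $v_0,\dots,v_n$ is the unique path from $v$ to $u$ in $B_\Lambda(u)$.
   Context: $\kappa(x,y,z)=-x^2-y^2+z^2+xyz-2$; for $u=(x,y,z)$, $\bar z(u)=-xy-z$ and $\tau(u)=-z\,\bar z(u)$. $Q_x(x,y,z)=(yz-x,y,z)$, $Q_y(x,y,z)=(x,xz-y,z)$, $Q_z(x,y,z)=(x,y,-xy-z)$, $\Lambda=\langle Q_x,Q_y,Q_z\rangle$. $\Omega_0^M=\{(x,y,z): z<-2,\ xy+z>2\}$. For $u\in\Omega_0^M$ the binary tree $B_\Lambda(u)$ is defined inductively: $u$ is the root; its two descendents are $Q_x(u)$ and $Q_y(u)$; if $v\ne u$ is a node with parent $\hat v$ and $v=\lambda\hat v$ with $\lambda\in\{Q_x,Q_y,Q_z\}$, then the two descendents of $v$ are $\lambda_1v$ and $\lambda_2v$ where $\{\lambda_1,\lambda_2\}=\{Q_x,Q_y,Q_z\}\setminus\{\lambda\}$. *)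

(* Defs.v *)
From Stdlib Require Import Reals List Arith.
Open Scope R_scope.

Definition pt : Type := (R * R * R)%type.

Definition kappa (u : pt) : R :=
  let '(x, y, z) := u in - x^2 - y^2 + z^2 + x*y*z - 2.

Definition zbar (u : pt) : R := let '(x, y, z) := u in - x*y - z.

Definition tau (u : pt) : R := let '(_, _, z) := u in - z * zbar u.

Definition Qx (u : pt) : pt := let '(x, y, z) := u in (y*z - x, y, z).
Definition Qy (u : pt) : pt := let '(x, y, z) := u in (x, x*z - y, z).
Definition Qz (u : pt) : pt := let '(x, y, z) := u in (x, y, - x*y - z).

Definition Omega0M (u : pt) : Prop :=
  let '(x, y, z) := u in z < -2 /\ x*y + z > 2.

Inductive move := MX | MY | MZ.

Definition apply_move (m : move) (p : pt) : pt :=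
  match m with MX => Qx p | MY => Qy p | MZ => Qz p end.

(* A node of the binary tree B_Lambda(u) is encoded by the word of moves
   leading to it from the root, listed in order of application
   (first element = first move applied to u). *)
Fixpoint no_repeat (m : move) (w : list move) : Prop :=
  match w with
  | nil => True
  | m' :: w' => m' <> m /\ no_repeat m' w'
  end.

Definition tree_word (w : list move) : Prop :=
  match w with
  | nil => True
  | m :: w' => (m = MX \/ m = MY) /\ no_repeat m w'
  end.

Definition node_val (u : pt) (w : list move) : pt :=
  fold_left (fun p m => apply_move m p) w u.

Definition descent_step (p : pt) : pt :=
  if Rlt_dec (tau (Qx p)) (tau p) then Qx p
  else if Rlt_dec (tau (Qy p)) (tau p) then Qy p
  else Qz p.

Fixpoint descent (v : pt) (i : nat) : pt :=
  match i with
  | O => v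
  | S i' => descent_step (descent v i')
  end.

(* Main.v *)
Require Import Defs.
From Stdlib Require Import Reals List Arith Lra Lia Psatz.
Open Scope R_scope.

Definition inv (m : move) (p : pt) : Prop :=
  let '(x, y, z) := p in
  match m with
  | MX => 0 < x*y*z /\ x*y*z < 2*x^2 /\ 2*y^2 < x*y*z /\ 4 < z^2
  | MY => 0 < x*y*z /\ x*y*z < 2*y^2 /\ 2*x^2 < x*y*z /\ 4 < z^2
  | MZ => x*y*z < 0 /\ 4 < z^2
  end.

Lemma key_ineq (a b P : R) : 0 < a -> 0 < P -> P < 2*a -> P*P = a*b -> b < 2*P.
Proof. intros. nra. Qed.

Lemma step_ok m p : inv m p -> descent_step p = apply_move m p.
Proof.
  destruct p as [[x y] z]; unfold descent_step; simpl.
  destruct m; simpl; intros H.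
  - destruct H as [H1 [H2 [H3 H4]]].
    assert (y^2*z^2 < 2*(x*y*z)).
    { apply (key_ineq (x^2)); try nra. }
    destruct (Rlt_dec _ _) as [h1|h1]; [reflexivity|].
    exfalso; apply h1; nra.
  - destruct H as [H1 [H2 [H3 H4]]].
    assert (2*(x*y*z) < y^2*z^2).
    { assert (x^2*(2*(x*y*z)) < x^2 * (y^2*z^2)) by nra. nra. }
    assert (x^2*z^2 < 2*(x*y*z)).
    { apply (key_ineq (y^2)); try nra. }
    destruct (Rlt_dec _ _) as [h1|h1]; [exfalso; nra|].
    destruct (Rlt_dec _ _) as [h2|h2]; [reflexivity|].
    exfalso; apply h2; nra.
  - destruct H as [H1 H2].
    destruct (Rlt_dec _ _) as [h1|h1]; [exfalso; nra|].
    destruct (Rlt_dec _ _) as [h2|h2]; [exfalso; nra|].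
    reflexivity.
Qed.

Lemma trans_XY x y z : 0 < x*y*z -> x*y*z < 2*x^2 -> 2*y^2 < x*y*z -> 4 < z^2 ->
  let y' := x*z - y in
  0 < x*y'*z /\ x*y'*z < 2*y'^2 /\ 2*x^2 < x*y'*z /\ 4 < z^2.
Proof.
  intros H1 H2 H3 H4 y'. unfold y'.
  assert (Hy : 0 < y^2).
  { destruct (Req_dec y 0) as [e|e]; [subst; lra|]. nra. }
  set (P := x*y*z) in *. set (T := x^2*z^2).
  assert (HPP : P*P = y^2*T) by (unfold P, T; ring).
  assert (HT : 2*P < T) by nra.
  assert (E1 : x*(x*z-y)*z = T - P) by (unfold P, T; ring).
  assert (E2 : (x*z-y)^2 = T - 2*P + y^2) by (unfold P, T; ring).
  rewrite E1, E2.
  assert (Hx : 2*x^2 < T/2) by (unfold T; nra).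
  split; [lra|]. split; [|split; [lra|exact H4]].
  assert (T*(T - 3*P + 2*y^2) = (T-P)*(T-2*P)) by (rewrite Rmult_plus_distr_l; nra).
  assert (0 < T) by lra.
  assert (0 < T*(T - 3*P + 2*y^2)) by nra.
  nra.
Qed.

Lemma trans m m' p : inv m p -> m' <> m -> inv m' (apply_move m' p).
Proof.
  destruct p as [[x y] z]; destruct m, m'; cbn [inv apply_move Qx Qy Qz]; intros H Hne;
    try (exfalso; apply Hne; reflexivity).
  - destruct H as [H1 [H2 [H3 H4]]].
    destruct (trans_XY x y z H1 H2 H3 H4) as [A [B [C D]]]. auto.
  - destruct H as [H1 [H2 [H3 H4]]]. split.
    + assert (x*y*(-x*y-z) = -(x*y)^2 - x*y*z) by ring. nra.
    + assert ((-x*y-z)^2 = (x*y)^2 + 2*(x*y*z) + z^2) by ring. nra.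
  - destruct H as [H1 [H2 [H3 H4]]].
    assert (H1' : 0 < y*x*z) by lra.
    assert (H2' : y*x*z < 2*y^2) by lra.
    assert (H3' : 2*x^2 < y*x*z) by lra.
    destruct (trans_XY y x z H1' H2' H3' H4) as [A [B [C D]]].
    assert (E : (y*z-x)*y*z = y*(y*z-x)*z) by ring. rewrite E. auto.
  - destruct H as [H1 [H2 [H3 H4]]]. split.
    + assert (x*y*(-x*y-z) = -(x*y)^2 - x*y*z) by ring. nra.
    + assert ((-x*y-z)^2 = (x*y)^2 + 2*(x*y*z) + z^2) by ring. nra.
  - destruct H as [H1 H2].
    assert (E1 : (y*z-x)*y*z = y^2*z^2 - x*y*z) by ring.
    assert (E2 : (y*z-x)^2 = y^2*z^2 - 2*(x*y*z) + x^2) by ring.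
    rewrite E1, E2. repeat split; nra.
  - destruct H as [H1 H2].
    assert (E1 : x*(x*z-y)*z = x^2*z^2 - x*y*z) by ring.
    assert (E2 : (x*z-y)^2 = x^2*z^2 - 2*(x*y*z) + y^2) by ring.
    rewrite E1, E2. repeat split; nra.
Qed.

Lemma last_def : forall l (a d1 d2 : move), last (a::l) d1 = last (a::l) d2.
Proof. induction l as [|b l IH]; intros a d1 d2; [reflexivity|]. change (last (b :: l) d1 = last (b :: l) d2). apply IH. Qed.

Lemma last_cons (m' m : move) l : last (m' :: l) m = last l m'.
Proof. destruct l; [reflexivity|]. simpl (last (m' :: _ :: _) m). apply last_def. Qed.

Lemma walk_inv : forall l m p, no_repeat m l -> inv m p ->
  inv (last l m) (fold_left (fun p m => apply_move m p) l p).
Proof.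
  induction l as [|m' l IH]; intros m p Hn Hi; [simpl; exact Hi|]. cbn [fold_left].
  destruct Hn as [Hne Hn].
  assert (E : last (m' :: l) m = last l m') by apply last_cons.
  rewrite E. apply IH; [exact Hn|]. apply (trans m); assumption.
Qed.

Lemma root_inv m u : Omega0M u -> (m = MX \/ m = MY) -> inv m (apply_move m u).
Proof.
  destruct u as [[x y] z]; intros [H1 H2] Hm.
  assert (Hb : inv MZ (x, y, z)).
  { cbn [inv]. split; nra. }
  destruct Hm; subst; apply (trans MZ); try exact Hb; discriminate.
Qed.

Lemma no_repeat_firstn : forall l m k, no_repeat m l -> no_repeat m (firstn k l).
Proof.
  induction l as [|a l IH]; intros m k H; destruct k; simpl; auto.
  destruct H as [H1 H2]. split; auto.
Qed.

Lemma tree_word_firstn w k : tree_word w -> tree_word (firstn k w).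
Proof.
  destruct w as [|m l]; destruct k; simpl; auto.
  intros [Hm Hn]. split; auto. apply no_repeat_firstn; auto.
Qed.

Lemma apply_twice m p : apply_move m (apply_move m p) = p.
Proof.
  destruct p as [[x y] z]; destruct m; cbn; f_equal; try f_equal; ring.
Qed.

Lemma parent_step u w : Omega0M u -> tree_word w -> w <> nil ->
  descent_step (node_val u w) = node_val u (removelast w).
Proof.
  intros Hu Hw Hne.
  assert (Hi : inv (last w MX) (node_val u w)).
  { destruct w as [|m l]; [congruence|].
    destruct Hw as [Hm Hn]. unfold node_val. cbn [fold_left].
    assert (E : last (m :: l) MX = last l m) by apply last_cons.
    rewrite E. apply walk_inv; auto. apply root_inv; auto. }
  rewrite (step_ok _ _ Hi).
  destruct (exists_last Hne) as [w0 [a Ea]]. rewrite Ea in *.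
  rewrite last_last. rewrite removelast_last.
  unfold node_val. rewrite fold_left_app. simpl. apply apply_twice.
Qed.

Theorem mainTheorem10 :
  forall (c : R) (u : pt) (w : list move),
    c < -14 ->
    Omega0M u ->
    kappa u = c ->
    tree_word w ->
    exists n : nat,
      descent (node_val u w) n = u /\
      n = length w /\
      (forall i : nat, (i <= n)%nat ->
         descent (node_val u w) i = node_val u (firstn (n - i) w)).
Proof.
  intros c u w _ Hu _ Hw.
  assert (Hall : forall i : nat, (i <= length w)%nat ->
         descent (node_val u w) i = node_val u (firstn (length w - i) w)).
  { induction i as [|i IH]; intros Hi.
    - simpl. rewrite Nat.sub_0_r, firstn_all. reflexivity.
    - simpl. rewrite IH by lia.
      replace (length w - i)%nat with (S (length w - S i)) by lia.
      rewrite parent_step; auto.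
      + rewrite removelast_firstn by lia. reflexivity.
      + apply tree_word_firstn; auto.
      + intro E. apply (f_equal (@length move)) in E.
        rewrite length_firstn in E. simpl length in E. lia. }
  exists (length w). split; [|split; [reflexivity|exact Hall]].
  rewrite Hall by lia. rewrite Nat.sub_diag. reflexivity.
Qed.
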